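(* Let $X$ be a nonempty compact Hausdorff space and $T\in M(X,X)$. Then there exists a nonempty subset $A\subset X$ with $T(A)=A$.
   Context: A continuous multivalued map $X\to Y$ is a subset $T\subset X\times Y$ such that the restriction of the projection $X\times Y\to X$ to $T$ is proper (universally closed; equivalently closed with compact fibers), surjective and has finite fibers; $M(X,Y)$ is the set of these. For $A\subset X$, $T(A)$ denotes the image of $T\cap(A\times X)$ under the projection to the second factor; a subset $A$ with $T(A)=A$ is called a fixed subset. *)

(* Defs.v *)
From HB Require Import structures.
From mathcomp Require Import all_boot all_order.
From mathcomp Require Import all_classical all_reals all_analysis.
Set Implicit Arguments. Unset Strict Implicit. Unset Printing Implicit Defensive.
Local Open Scope classical_set_scope.

(* A continuous multivalued map X -> Y: a subset T of X * Y such that the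
   projection T -> X (restriction of fst) is proper (closed, with compact
   fibers), surjective and has finite fibers. *)
Definition multimap (X Y : topologicalType) (T : set (X * Y)) : Prop :=
  (forall F : set (X * Y), closed F -> closed (fst @` (T `&` F))) /\
  (forall x : X, compact (T `&` [set p | p.1 = x])) /\
  (forall x : X, exists y : Y, T (x, y)) /\
  (forall x : X, finite_set [set y : Y | T (x, y)]).

Definition mimage (X Y : topologicalType) (T : set (X * Y)) (A : set X) : set Y :=
  snd @` (T `&` [set p | A p.1]).

(* Main.v *)
Require Import Defs.
From HB Require Import structures.
From mathcomp Require Import all_boot all_order.
From mathcomp Require Import all_classical all_reals all_analysis.
Local Open Scope classical_set_scope.

Lemma nb {X Y : topologicalType} {p : X * Y} {N M} :
  nbhs p.1 N -> nbhs p.2 M -> nbhs p (N `*` M).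
Proof. by move=> HN HM; exists (N, M). Qed.

Lemma closed_fstpre (X Y : topologicalType) (B : set X) :
  closed B -> closed [set p : X * Y | B p.1].
Proof.
move=> cB p cp; apply: cB => N HN.
have [q [Bq [Nq _]]] := cp _ (nb HN (@filterT _ (nbhs p.2) _)).
by exists q.1.
Qed.

Lemma closed_sndpre (X Y : topologicalType) (B : set Y) :
  closed B -> closed [set p : X * Y | B p.2].
Proof.
move=> cB p cp; apply: cB => N HN.
have [q [Bq [_ Nq]]] := cp _ (nb (@filterT _ (nbhs p.1) _) HN).
by exists q.2.
Qed.

Lemma T_closed (X : topologicalType) (T : set (X * X)) :
  hausdorff_space X -> multimap T -> closed T.
Proof.
move=> hX [hcl [hcomp _]] [x y] cT.
have step1 : forall U, nbhs y U -> exists z, T (x, z) /\ closure U z.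
  move=> U hU.
  have cS := hcl _ (@closed_sndpre X X _ (@closed_closure _ U)).
  have : closure (fst @` (T `&` [set p : X * X | closure U p.2])) x.
    move=> N HN.
    have [q [Tq [Nq Uq]]] := cT _ (@nb _ _ (x, y) _ _ HN hU).
    exists q.1; split => //; exists q => //; split => //.
    exact: subset_closure.
  move=> /cS [[a b] [Tq Fq] /= ax]; subst a.
  by exists b.
pose K := T `&` [set p : X * X | p.1 = x].
pose G := filter_from (nbhs y) (fun U => K `&` [set p : X * X | closure U p.2]).
have FG : Filter G.
  apply: filter_from_filter; first by exists setT; exact: filterT.
  move=> U V hU hV; exists (U `&` V); first exact: filterI.
  move=> p [Kp cp]; split; split => //; apply: (closure_subset _ cp) => ? []//.
have PG : ProperFilter G.
  apply: filter_from_proper => U hU.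
  have [z [Tz cz]] := step1 U hU.
  by exists (x, z).
have GK : G K by exists setT; [exact: filterT| move=> p []].
have [[a b] [[Tp /= ax] clp]] := hcomp x G PG GK.
subst a.
suff -> : y = b by [].
apply: hX => A B hA hB.
have hB' := nbhs_interior hB.
have [q [[Kq clAq] [_ Bq]]] := clp _ (setT `*` B°)
  (ex_intro2 _ _ A hA (fun p H => H)) (@nb _ _ (x, b) _ _ (@filterT _ (nbhs x) _) hB').
have [w [Aw Bw]] := clAq (B°) (open_nbhs_nbhs (conj (@open_interior _ B) Bq)).
by exists w; split => //; exact: interior_subset.
Qed.

Lemma mimage_closed (X : topologicalType) (T : set (X * X)) (B : set X) :
  hausdorff_space X -> compact [set: X] -> multimap T -> closed B ->
  closed (mimage T B).
Proof.
move=> hX hcX hT cB.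
apply: compact_closed => //.
apply: continuous_compact.
  by apply: continuous_subspaceT => p; exact: cvg_snd.
apply: (@subclosed_compact _ _ setT).
- exact: (closedI (@T_closed X T hX hT) (@closed_fstpre X X B cB)).
- by rewrite -setXTT; exact: compact_setX.
- done.
Qed.

Theorem mainTheorem14 (X : topologicalType) (T : set (X * X)) :
  [set: X] !=set0 -> hausdorff_space X -> compact [set: X] ->
  multimap T ->
  exists A : set X, A !=set0 /\ mimage T A = A.
Proof.
move=> [x0 _] hX hcX hT.
pose P := [set C : set X | closed (~` C) /\ ~` C !=set0 /\
  mimage T (~` C) `<=` ~` C].
have [A [[cB [[b0 Bb0] TB]] Amax]] : exists A, P A /\ forall B, A `<` B -> ~ P B.
  apply: Zorn_bigcup => F FP Ftot.
  rewrite /P /= setC_bigcup; split; [|split].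
  - by apply: closed_bigI => C FC; exact: (FP C FC).1.
  - have [[C0 FC0]|F0] := pselect (F !=set0); last first.
      by exists x0 => C FC; exfalso; apply: F0; exists C.
    pose G := filter_from F (fun C => ~` C).
    have FG : Filter G.
      apply: filter_from_filter; first by exists C0.
      move=> C1 C2 F1 F2; have [C12|C21] := Ftot _ _ F1 F2.
      + by exists C2 => // z nz; split => // /C12.
      + by exists C1 => // z nz; split => // /C21.
    have PG : ProperFilter G.
      by apply: filter_from_proper => C FC; exact: (FP C FC).2.1.
    have [p [_ clp]] := hcX G PG (ex_intro2 _ _ C0 FC0 (fun _ _ => I)).
    exists p => C FC; apply: (FP C FC).1 => N HN.
    exact: clp _ _ (ex_intro2 _ _ C FC (fun _ H => H)) HN.
  - move=> y [p [Tp Hp] <-] C FC; apply: (FP C FC).2.2.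
    by exists p => //; split => //; exact: Hp.
exists (~` A); split; first by exists b0.
apply/seteqP; split => //.
move=> x Bx; apply: contrapT => nx.
apply: (Amax (~` mimage T (~` A))); last first.
  rewrite /P /= setCK; split; [|split].
  - exact: mimage_closed.
  - have [y Ty] := hT.2.2.1 b0.
    by exists y; exists (b0, y) => //; split.
  - move=> y [p [Tp Hp] <-]; exists p => //; split => //; exact: TB.
split.
  by move=> z Az Tz; exact: (TB _ Tz).
by move=> /(_ x nx).
Qed.
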